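(* In the PIR-PSI under a storage constraint model described in the context, fix a realization $h$ of the cached index set, with messages labelled so that $h=\{1,\dots,M\}$ and the first $Lr_i$ symbols of $W_i$ are cached for $i=1,\dots,M$; set $r_k=0$ for $k>M$. Then for every $k\in\{1,\dots,K-1\}$, $$I\big(W_{1:k};Q_{1:N}^{[k+1,h]},A_{1:N}^{[k+1,h]}\,\big|\,\mathcal{W}_h,W_{k+1:K}\big)\ \ge\ \frac1N\, I\big(W_{1:k-1};Q_{1:N}^{[k,h]},A_{1:N}^{[k,h]}\,\big|\,\mathcal{W}_h,W_{k:K}\big)+\frac{L}{N}(1-r_k)-o(L).$$
   Context: Model: $N$ non-communicating databases each store the same $K$ independent messages $W_1,\dots,W_K$, $H(W_k)=L$, jointly independent. The user accesses an index set $h\subset[K]$, $|h|=M$, and caches the first $Lr_i$ symbols of the $i$-th accessed message, $\sum_{i=1}^M r_i=S$; $\mathcal{W}_h$ denotes the cached content. For desired index $\theta$, queries $Q_n^{[\theta,h]}$, $n\in[N]$, are independent of $W_{1:K}$; answers satisfy $H(A_n^{[\theta,h]}\mid Q_n^{[\theta,h]},W_{1:K})=0$; reliability: $H(W_\theta\mid\mathcal{W}_h,Q_{1:N}^{[\theta,h]},A_{1:N}^{[\theta,h]})=o(L)$ where $o(L)/L\to0$ as $L\to\infty$; privacy: for each database $n$, $(Q_n^{[\theta,h]},A_n^{[\theta,h]},W_{1:K})$ has the same distribution for all $\theta\in[K]$ and all $M$-subsets $h$. Notation $X_{a:b}=(X_a,\dots,X_b)$, with $W_{1:0}$ empty. 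*)

(* Defs.v *)
From HB Require Import structures.
From mathcomp Require Import all_boot all_order all_algebra.
From mathcomp Require Import reals exp.
Set Implicit Arguments. Unset Strict Implicit. Unset Printing Implicit Defensive.
Import Order.TTheory GRing.Theory Num.Theory.
Local Open Scope ring_scope.

Definition is_distr (R : realType) (Om : finType) (p : Om -> R) : Prop :=
  (forall w, 0 <= p w) /\ \sum_(w : Om) p w = 1.

Definition prob (R : realType) (Om : finType) (p : Om -> R) (E : pred Om) : R :=
  \sum_(w : Om | E w) p w.

(* Shannon entropy in base b of a discrete random variable X : Om -> T,
   H(X) = - sum_x P(X=x) log_b P(X=x) = - sum_w p(w) log_b P(X = X w). *)
Definition entropy (R : realType) (Om : finType) (p : Om -> R) (b : R)
  (T : eqType) (X : Om -> T) : R :=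
  - \sum_(w : Om) p w * (ln (prob p (fun v => X v == X w)) / ln b).

Definition pairRV (Om : Type) (T U : Type) (X : Om -> T) (Y : Om -> U) :
  Om -> T * U := fun w => (X w, Y w).

Definition centropy (R : realType) (Om : finType) (p : Om -> R) (b : R)
  (T U : eqType) (X : Om -> T) (Y : Om -> U) : R :=
  entropy p b (pairRV X Y) - entropy p b Y.

Definition minfo (R : realType) (Om : finType) (p : Om -> R) (b : R)
  (T U V : eqType) (X : Om -> T) (Y : Om -> U) (Z : Om -> V) : R :=
  centropy p b X Z - centropy p b X (pairRV Y Z).

Definition indep (R : realType) (Om : finType) (p : Om -> R)
  (T U : eqType) (X : Om -> T) (Y : Om -> U) : Prop :=
  forall x y, prob p (fun w => (X w == x) && (Y w == y))
              = prob p (fun w => X w == x) * prob p (fun w => Y w == y).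

Definition mutually_indep (R : realType) (Om : finType) (p : Om -> R)
  (I : finType) (T : eqType) (X : I -> Om -> T) : Prop :=
  forall x : I -> T,
    prob p (fun w => [forall i, X i w == x i])
    = \prod_(i : I) prob p (fun w => X i w == x i).

Definition same_distr (R : realType) (Om : finType) (p : Om -> R)
  (T : eqType) (X Y : Om -> T) : Prop :=
  forall v, prob p (fun w => X w == v) = prob p (fun w => Y w == v).

Definition msgs (Om F : finType) (L K : nat) (W : 'I_K -> Om -> {ffun 'I_L -> F})
  (w : Om) : {ffun 'I_K -> {ffun 'I_L -> F}} := [ffun j => W j w].

(* W_{a+1 : b} in 1-indexed notation, i.e. the messages with 0-based index
   j such that a <= j < b. *)
Definition Wseg (Om F : finType) (L K : nat) (W : 'I_K -> Om -> {ffun 'I_L -> F})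
  (a b : nat) (w : Om) : seq {ffun 'I_L -> F} :=
  [seq W j w | j <- [seq j <- enum 'I_K | (a <= nat_of_ord j < b)%N]].

(* cached content W_h: the i-th accessed message (elements of h in increasing
   order) has its first c i = L r_i symbols cached. *)
Definition cacheRV (Om F : finType) (L K M : nat)
  (W : 'I_K -> Om -> {ffun 'I_L -> F}) (c : 'I_M -> nat) (h : {set 'I_K})
  (w : Om) : seq (seq F) :=
  [seq take jn.2 (val (fgraph (W jn.1 w)))
  | jn <- zip (enum h) [seq c i | i <- enum 'I_M]].

(* number of cached symbols L r_{k+1} of the (k+1)-th accessed message
   (0-based index k); equals 0 for k >= M. *)
Definition cache_size (M : nat) (c : 'I_M -> nat) (k : nat) : nat :=
  nth 0%N [seq c i | i <- enum 'I_M] k.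

Definition QAall (Om : finType) (N K : nat) (Qt At : eqType)
  (Q : 'I_N -> 'I_K -> {set 'I_K} -> Om -> Qt)
  (A : 'I_N -> 'I_K -> {set 'I_K} -> Om -> At)
  (th : 'I_K) (h : {set 'I_K}) (w : Om) : {ffun 'I_N -> Qt * At} :=
  [ffun n => (Q n th h w, A n th h w)].

Definition ordpred (k K : nat) (hk : (k < K)%N) : 'I_K :=
  Ordinal (leq_ltn_trans (leq_pred k) hk).

(* Main.v *)
Require Import Defs.
From HB Require Import structures.
From mathcomp Require Import all_boot all_order all_algebra.
From mathcomp Require Import reals exp.
From mathcomp Require Import ring lra zify.
From Corelib Require Import Setoid.
Import Order.TTheory GRing.Theory Num.Theory.
Local Open Scope ring_scope.

Set Implicit Arguments. Unset Strict Implicit. Unset Printing Implicit Defensive.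


Section Info.
Variables (R : realType) (Om : finType) (p : Om -> R).
Hypothesis hp : is_distr p.

Lemma p_ge0 w : 0 <= p w. Proof. by case: hp. Qed.
Lemma p_sum1 : \sum_w p w = 1. Proof. by case: hp. Qed.

Lemma prob_ge0 E : 0 <= prob p E.
Proof. by apply: sumr_ge0 => w _; exact: p_ge0. Qed.

Lemma prob_ge_p (E : pred Om) w : E w -> p w <= prob p E.
Proof.
move=> Ew; rewrite /prob (bigD1 w) //= lerDl.
by apply: sumr_ge0 => v _; exact: p_ge0.
Qed.

Definition Pr (T : eqType) (X : Om -> T) w := prob p (fun v => X v == X w).

Lemma Pr_gt0 (T : eqType) (X : Om -> T) w : 0 < p w -> 0 < Pr X w.
Proof. move=> pw; apply: (lt_le_trans pw); exact: prob_ge_p. Qed.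

Lemma Pr_ge0 (T : eqType) (X : Om -> T) w : 0 <= Pr X w.
Proof. exact: prob_ge0. Qed.

Lemma Pr_eq (T : eqType) (X : Om -> T) w u : X w = X u -> Pr X w = Pr X u.
Proof. by rewrite /Pr => ->. Qed.

Definition Sh (T : eqType) (X : Om -> T) := \sum_w p w * ln (Pr X w).

Lemma entropyE (b : R) (T : eqType) (X : Om -> T) :
  entropy p b X = - Sh X / ln b.
Proof.
by rewrite /entropy /Sh mulNr mulr_suml; congr (- _); apply: eq_bigr => w _; rewrite mulrA.
Qed.

Lemma S_part (T U : eqType) (X : Om -> T) (Y : Om -> U) :
  (forall w v, X w = X v <-> Y w = Y v) -> Sh X = Sh Y.
Proof.
move=> h; apply: eq_bigr => w _; congr (_ * ln _).
by apply: eq_bigl => v; apply/eqP/eqP => /h.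
Qed.

Lemma entropy_part b (T U : eqType) (X : Om -> T) (Y : Om -> U) :
  (forall w v, X w = X v <-> Y w = Y v) -> entropy p b X = entropy p b Y.
Proof. by move=> h; rewrite !entropyE (S_part h). Qed.

Lemma ln_le_sub1 (x : R) : 0 < x -> ln x <= x - 1.
Proof.
move=> x0; have := @le_ln1Dx R (x - 1); rewrite addrCA subrr addr0; apply.
by rewrite ltrBrDl subrr.
Qed.

Lemma sum_class (E : pred Om) (G : R) :
  prob p E = G -> \sum_(w | E w) p w / G <= 1.
Proof.
move=> hG; rewrite -mulr_suml -/(prob p E) hG.
have [->|G0] := eqVneq G 0; first by rewrite invr0 mulr0 ler01.
by rewrite mulfV.
Qed.


Lemma term_bound (a b c d pw : R) : 0 <= pw -> (0 < pw -> 0 < a /\ 0 < b /\ 0 < c /\ 0 < d) ->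
  pw * (ln a + ln b - (ln c + ln d)) <= pw * (a * b / (c * d)) - pw.
Proof.
move=> pw0 hpos; have [->|pwp] := eqVneq pw 0; first by rewrite !mul0r subrr.
have pwg : 0 < pw by rewrite lt_def pwp pw0.
have [a0 [b0 [c0 d0]]] := hpos pwg.
rewrite -[X in _ <= _ - X]mulr1 -mulrBr; apply: ler_wpM2l => //.
rewrite -lnM ?posrE // -lnM ?posrE // -ln_div ?posrE ?mulr_gt0 //.
by apply: ln_le_sub1; rewrite divr_gt0 ?mulr_gt0.
Qed.

Lemma submod (T U V : eqType) (X : Om -> T) (Y : Om -> U) (Z : Om -> V) :
  Sh (pairRV X Z) + Sh (pairRV Y Z) <= Sh (pairRV (pairRV X Y) Z) + Sh Z.
Proof.
suff hs : \sum_w p w * (ln (Pr (pairRV X Z) w) + ln (Pr (pairRV Y Z) w)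
           - (ln (Pr (pairRV (pairRV X Y) Z) w) + ln (Pr Z w))) <= 0.
  have e : \sum_w p w * (ln (Pr (pairRV X Z) w) + ln (Pr (pairRV Y Z) w)
           - (ln (Pr (pairRV (pairRV X Y) Z) w) + ln (Pr Z w))) =
     Sh (pairRV X Z) + Sh (pairRV Y Z) - (Sh (pairRV (pairRV X Y) Z) + Sh Z).
    rewrite /Sh -!big_split -sumrN -big_split; apply: eq_bigr => w _ /=; ring.
  by rewrite -subr_le0 -e.
apply: (le_trans (y := \sum_w (p w * (Pr (pairRV X Z) w * Pr (pairRV Y Z) w /
       (Pr (pairRV (pairRV X Y) Z) w * Pr Z w)) - p w))).
  apply: ler_sum => w _; apply: term_bound; first exact: p_ge0.
  by move=> pw; split; [|split; [|split]]; apply: Pr_gt0.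
rewrite sumrB p_sum1 subr_le0.
pose D w := Pr (pairRV (pairRV X Y) Z) w * Pr Z w.
have E1 : forall w, p w * (Pr (pairRV X Z) w * Pr (pairRV Y Z) w / D w) =
   \sum_u \sum_v (if (X u == X w) && (Z u == Z w) then
                  if (Y v == Y w) && (Z v == Z w) then p u * p v * p w / D w else 0 else 0).
  move=> w; rewrite /Pr /prob /pairRV.
  set A := \sum_(_ | (X _, Z _) == _) _; set B := \sum_(_ | (Y _, Z _) == _) _.
  transitivity (\sum_u (if (X u == X w) && (Z u == Z w) then p u * (B * (p w / D w)) else 0)).
    rewrite -big_mkcond /= -mulr_suml.
    under eq_bigl => u do rewrite -xpair_eqE.
    rewrite -/A; ring.
  apply: eq_bigr => u _; case: ifP => _; last by rewrite big1.
  rewrite /B mulr_suml mulr_sumr big_mkcond /=; apply: eq_bigr => v _.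
  rewrite xpair_eqE; case: ifP => _; last by [].
  ring.
rewrite (eq_bigr _ (fun w _ => E1 w)) {E1}.
rewrite exchange_big /=.
apply: (le_trans (y := \sum_u p u / Pr Z u * Pr Z u)); last first.
  rewrite -p_sum1; apply: ler_sum => u _.
  have [->|h0] := eqVneq (Pr Z u) 0; first by rewrite mulr0 p_ge0.
  by rewrite divfK.
apply: ler_sum => u _; rewrite exchange_big /=.
rewrite {2}/Pr /prob mulr_sumr [in X in _ <= X]big_mkcond /=; apply: ler_sum => v _.
pose E w := (X w == X u) && (Y w == Y v) && (Z w == Z u).
pose G := prob p E.
have E2 : forall w, (if (X u == X w) && (Z u == Z w) then
                  if (Y v == Y w) && (Z v == Z w) then p u * p v * p w / D w else 0 else 0)
   = if Z v == Z u then (if E w then p u / Pr Z u * p v * (p w / G) else 0) else 0.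
  move=> w; rewrite /E.
  have [exu|nxu] := eqVneq (X u) (X w); last first.
    by rewrite /= ?andbF; case: ifP.
  have [ezu|nzu] := eqVneq (Z u) (Z w); last first.
    by rewrite /= ?andbF; case: ifP.
  have [eyv|nyv] := eqVneq (Y v) (Y w); last first.
    by rewrite /= ?andbF; case: ifP.
  have [ezv|nzv] := eqVneq (Z v) (Z w); last first.
    by rewrite /= ezu (negbTE nzv).
  rewrite /= ezv -ezu eqxx /D.
  have -> : Pr (pairRV (pairRV X Y) Z) w = G.
    rewrite /Pr /G /prob /pairRV; apply: eq_bigl => t.
    by rewrite !xpair_eqE /E exu eyv ezu.
  have -> : Pr Z w = Pr Z u by rewrite /Pr ezu.
  by rewrite invfM; ring.
rewrite (eq_bigr _ (fun w _ => E2 w)) {E2}.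
case: ifP => _; last by rewrite big1.
rewrite -big_mkcond /= -mulr_sumr -[X in _ <= X]mulr1 ler_wpM2l //.
  by rewrite mulr_ge0 ?divr_ge0 ?p_ge0 ?Pr_ge0.
by apply: sum_class.
Qed.


Lemma pairE (T U : eqType) (X : Om -> T) (Y : Om -> U) w v :
  pairRV X Y w = pairRV X Y v <-> X w = X v /\ Y w = Y v.
Proof. by rewrite /pairRV; split => [[-> ->]|[-> ->]]. Qed.

Lemma S_ext (T : eqType) (X Y : Om -> T) : (forall w, X w = Y w) -> Sh X = Sh Y.
Proof. by move=> h; apply: S_part => w v; rewrite !h. Qed.

Lemma sum_group (V : eqType) (T : Om -> V) (s : seq V) (psi : V -> R) :
  uniq s -> (forall w, T w \in s) ->
  \sum_w p w * psi (T w) = \sum_(v <- s) prob p (fun w => T w == v) * psi v.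
Proof.
move=> us hs.
transitivity (\sum_(v <- s) \sum_w (if T w == v then p w * psi (T w) else 0)); last first.
  apply: eq_bigr => v _; rewrite /prob mulr_suml [in RHS]big_mkcond /=; apply: eq_bigr => w _.
  by case: eqP => // ->.
rewrite exchange_big /=; apply: eq_bigr => w _.
rewrite (bigD1_seq (T w)) //= eqxx big1 ?addr0 // => v /negbTE.
by rewrite eq_sym => ->.
Qed.

Lemma prob_ind (E : pred Om) : prob p E = \sum_w p w * (E w)%:R.
Proof.
by rewrite /prob big_mkcond /=; apply: eq_bigr => w _; case: (E w); rewrite ?mulr1 ?mulr0.
Qed.

Lemma same_distr_sum (V : eqType) (T T' : Om -> V) (psi : V -> R) :
  same_distr p T T' -> \sum_w p w * psi (T w) = \sum_w p w * psi (T' w).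
Proof.
move=> hd; set s := undup ([seq T w | w <- enum Om] ++ [seq T' w | w <- enum Om]).
have us : uniq s by apply: undup_uniq.
have h1 : forall w, T w \in s by move=> w; rewrite mem_undup mem_cat map_f ?mem_enum.
have h2 : forall w, T' w \in s by move=> w; rewrite mem_undup mem_cat map_f ?orbT ?mem_enum.
rewrite (sum_group psi us h1) (sum_group psi us h2).
by apply: eq_bigr => v _; rewrite hd.
Qed.

Lemma S_same_distr (V W : eqType) (T T' : Om -> V) (g : V -> W) :
  same_distr p T T' -> Sh (fun w => g (T w)) = Sh (fun w => g (T' w)).
Proof.
move=> hd; rewrite /Sh /Pr.
have hP : forall y, prob p (fun u => g (T u) == y) = prob p (fun u => g (T' u) == y).
  move=> y; rewrite !prob_ind.
  exact: (same_distr_sum (fun v => (g v == y)%:R) hd).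
under eq_bigr => w _ do rewrite hP.
exact: (same_distr_sum (fun v => ln (prob p (fun u => g (T' u) == g v))) hd).
Qed.

Lemma S_const (T : eqType) (t : T) : Sh (fun _ => t) = 0.
Proof.
rewrite /Sh /Pr; apply: big1 => w _; rewrite /prob.
under eq_bigl => v do rewrite eqxx.
by rewrite p_sum1 ln1 mulr0.
Qed.

Lemma S_mono (T U : eqType) (X : Om -> T) (Y : Om -> U) : Sh (pairRV X Y) <= Sh Y.
Proof.
have := submod X X Y.
have -> : Sh (pairRV (pairRV X X) Y) = Sh (pairRV X Y).
  by apply: S_part => w v; rewrite !pairE; tauto.
move=> h; rewrite -(lerD2l (Sh (pairRV X Y))); apply: le_trans h _; by rewrite addrC.
Qed.

Lemma S_subadd (T U : eqType) (X : Om -> T) (Y : Om -> U) : Sh X + Sh Y <= Sh (pairRV X Y).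
Proof.
have := submod X Y (fun _ => tt).
rewrite S_const addr0.
have -> : Sh (pairRV X (fun _ => tt)) = Sh X by apply: S_part => w v; rewrite pairE; tauto.
have -> : Sh (pairRV Y (fun _ => tt)) = Sh Y by apply: S_part => w v; rewrite pairE; tauto.
have -> // : Sh (pairRV (pairRV X Y) (fun _ => tt)) = Sh (pairRV X Y).
by apply: S_part => w v; rewrite pairE; tauto.
Qed.

Lemma S_le0 (T : eqType) (X : Om -> T) : Sh X <= 0.
Proof.
have := S_mono X (fun _ => tt); rewrite S_const.
have -> // : Sh (pairRV X (fun _ => tt)) = Sh X.
by apply: S_part => w v; rewrite pairE; tauto.
Qed.


Lemma S_indep (T U : eqType) (X : Om -> T) (Y : Om -> U) :
  (forall w, prob p (fun v => (X v == X w) && (Y v == Y w)) = Pr X w * Pr Y w) ->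
  Sh (pairRV X Y) = Sh X + Sh Y.
Proof.
move=> h; rewrite /Sh -big_split; apply: eq_bigr => w _ /=.
have -> : Pr (pairRV X Y) w = Pr X w * Pr Y w.
  by rewrite -h /Pr /pairRV; apply: eq_bigl => v; rewrite xpair_eqE.
have [pw0|pwn] := eqVneq (p w) 0; first by rewrite pw0 !mul0r addr0.
have pwg : 0 < p w by rewrite lt_def pwn p_ge0.
by rewrite lnM ?posrE ?Pr_gt0 // mulrDr.
Qed.

Lemma S_unif (T : eqType) (X : Om -> T) (s : seq T) :
  (forall w, X w \in s) -> - Sh X <= ln (size s)%:R.
Proof.
move=> hs.
have [w0 _] : exists w0 : Om, true.
  case: (pickP (@predT Om)) => [w0|h0]; first by exists w0.
  move: p_sum1; rewrite big1 => [/eqP|w _]; first by rewrite eq_sym oner_eq0.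
  by have := h0 w.
have m0 : (0 < size s)%N by case: s hs => // /(_ w0).
set m := (size s)%:R : R.
have mg : 0 < m by rewrite ltr0n.
have key : - Sh X - ln m <= \sum_w (p w * (m * Pr X w)^-1 - p w).
  have -> : - Sh X - ln m = \sum_w p w * (ln ((m * Pr X w)^-1)).
    rewrite -[ln m]mul1r -p_sum1 mulr_suml /Sh -!sumrN -big_split /=.
    apply: eq_bigr => w _.
    have [->|pwn] := eqVneq (p w) 0; first by rewrite !mul0r oppr0 addr0.
    have pwg : 0 < p w by rewrite lt_def pwn p_ge0.
    rewrite lnV ?posrE ?mulr_gt0 ?Pr_gt0 // lnM ?posrE ?Pr_gt0 //; ring.
  apply: ler_sum => w _.
  have [->|pwn] := eqVneq (p w) 0; first by rewrite !mul0r subrr.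
  have pwg : 0 < p w by rewrite lt_def pwn p_ge0.
  rewrite -[X in _ <= _ - X]mulr1 -mulrBr ler_wpM2l ?p_ge0 //.
  by apply: ln_le_sub1; rewrite invr_gt0 mulr_gt0 ?Pr_gt0.
rewrite -subr_le0; apply: (le_trans key).
rewrite sumrB p_sum1 subr_le0.
have -> : \sum_w p w * (m * Pr X w)^-1 = m^-1 * \sum_w p w * (fun v => (prob p (fun u => X u == v))^-1) (X w).
  rewrite mulr_sumr; apply: eq_bigr => w _; rewrite invfM /Pr; ring.
rewrite (_ : \sum_w _ = \sum_(v <- undup s) prob p (fun u => X u == v) * (prob p (fun u => X u == v))^-1); last first.
  apply: (@sum_group _ X (undup s) (fun v => (prob p (fun u => X u == v))^-1) (undup_uniq s)).
  by move=> w; rewrite mem_undup.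
rewrite ler_pdivrMl // mulr1.
apply: (le_trans (y := \sum_(v <- undup s) 1)).
  apply: ler_sum => v _; have [->|h0] := eqVneq (prob p (fun w => X w == v)) 0.
    by rewrite mul0r ler01.
  by rewrite mulfV.
have e : forall r : seq T, \sum_(v <- r) (1 : R) = (size r)%:R.
  by elim=> [|a r ih]; rewrite ?big_nil ?big_cons ?ih //= -add1n natrD.
by rewrite e /m ler_nat size_undup.
Qed.


Definition Jh (T U V : eqType) (X : Om -> T) (Y : Om -> U) (Z : Om -> V) :=
  Sh (pairRV X (pairRV Y Z)) - Sh (pairRV Y Z) - Sh (pairRV X Z) + Sh Z.

Lemma minfoE b (T U V : eqType) (X : Om -> T) (Y : Om -> U) (Z : Om -> V) :
  minfo p b X Y Z = Jh X Y Z / ln b.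
Proof. rewrite /minfo /centropy !entropyE /Jh; ring. Qed.

Lemma pairE' (T U : Type) (a c : T) (b d : U) : (a, b) = (c, d) <-> a = c /\ b = d.
Proof. by split => [[-> ->]|[-> ->]]. Qed.

Lemma consE (T : Type) (x y : T) l l' : x :: l = y :: l' <-> x = y /\ l = l'.
Proof. by split => [[-> ->]|[-> ->]]. Qed.

Lemma J_mono (T U U' V : eqType) (X : Om -> T) (Y : Om -> U) (Y' : Om -> U') (Z : Om -> V) :
  (forall w v, Y w = Y v -> Y' w = Y' v) -> Jh X Y' Z <= Jh X Y Z.
Proof.
move=> hf; have := submod X Y (pairRV Y' Z).
have -> : Sh (pairRV Y (pairRV Y' Z)) = Sh (pairRV Y Z).
  apply: S_part => w v; rewrite !pairE; split; first tauto.
  by move=> [h1 h2]; split => //; split => //; apply: hf.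
have -> : Sh (pairRV (pairRV X Y) (pairRV Y' Z)) = Sh (pairRV X (pairRV Y Z)).
  apply: S_part => w v; rewrite !pairE; split; first tauto.
  by move=> [h1 [h2 h3]]; split => //; split => //; apply: hf.
rewrite /Jh => h; lra.
Qed.


Ltac pt := move=> ? ?; rewrite /pairRV /= ?pairE' ?consE; try tauto.

Lemma S_list_step (T1 T2 V : eqType) (Qn : Om -> T1) (An : Om -> T2) (Qs : Om -> seq T1)
  (QAs : Om -> seq (T1 * T2)) (Z : Om -> V) :
  (forall w v, QAs w = QAs v -> Qs w = Qs v) ->
  Sh (pairRV (fun w => Qn w :: Qs w) Z) - Sh (pairRV (fun w => (Qn w, An w) :: QAs w) Z)
  <= (Sh (pairRV Qn Z) - Sh (pairRV (fun w => (Qn w, An w)) Z)) + (Sh (pairRV Qs Z) - Sh (pairRV QAs Z)).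
Proof.
move=> hQ.
have := submod An QAs (pairRV Qn (pairRV Qs Z)).
have := submod An Qs (pairRV Qn Z).
have := submod QAs Qn (pairRV Qs Z).
have -> : Sh (pairRV (fun w => Qn w :: Qs w) Z) = Sh (pairRV Qn (pairRV Qs Z)).
  by apply: S_part; pt.
have -> : Sh (pairRV (fun w => (Qn w, An w) :: QAs w) Z) =
          Sh (pairRV (pairRV An QAs) (pairRV Qn (pairRV Qs Z))).
  apply: S_part => w v; rewrite /pairRV /= ?pairE' ?consE; split.
    by move=> [[[h1 h2] h3] h4]; rewrite h1 h2 h3 h4 (hQ _ _ h3).
  by move=> [[h1 h2] [h3 [h4 h5]]]; rewrite h1 h2 h3 h5.
have -> : Sh (pairRV An (pairRV Qn (pairRV Qs Z))) = Sh (pairRV (pairRV An Qs) (pairRV Qn Z)).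
  by apply: S_part; pt.
have -> : Sh (pairRV QAs (pairRV Qn (pairRV Qs Z))) = Sh (pairRV (pairRV QAs Qn) (pairRV Qs Z)).
  by apply: S_part; pt.
have -> : Sh (pairRV Qs (pairRV Qn Z)) = Sh (pairRV Qn (pairRV Qs Z)).
  by apply: S_part; pt.
have -> : Sh (pairRV (fun w => (Qn w, An w)) Z) = Sh (pairRV An (pairRV Qn Z)).
  by apply: S_part; pt.
have -> : Sh (pairRV QAs Z) = Sh (pairRV QAs (pairRV Qs Z)).
  apply: S_part => w v; rewrite /pairRV /= ?pairE'; split; last by tauto.
  by move=> [h1 h2]; split => //; split => //; apply: hQ.
have -> : Sh (pairRV Qn (pairRV Qs Z)) = Sh (pairRV Qn (pairRV Qs Z)) by [].
have -> : Sh (pairRV QAs (pairRV Qs Z)) = Sh (pairRV QAs (pairRV Qs Z)) by [].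
move=> *; lra.
Qed.

Lemma S_list (I : eqType) (T1 T2 V : eqType) (Qf : I -> Om -> T1) (Af : I -> Om -> T2)
  (Z : Om -> V) (s : seq I) :
  Sh (pairRV (fun w => [seq Qf n w | n <- s]) Z)
  - Sh (pairRV (fun w => [seq (Qf n w, Af n w) | n <- s]) Z)
  <= \sum_(n <- s) (Sh (pairRV (Qf n) Z) - Sh (pairRV (fun w => (Qf n w, Af n w)) Z)).
Proof.
elim: s => [|n s ih].
  rewrite big_nil.
  have -> : Sh (pairRV (fun w => [seq Qf n w | n <- [::]]) Z) = Sh Z by apply: S_part; pt.
  have -> : Sh (pairRV (fun w => [seq (Qf n w, Af n w) | n <- [::]]) Z) = Sh Z by apply: S_part; pt.
  by rewrite subrr.
rewrite big_cons.
have hst := @S_list_step _ _ _ (Qf n) (Af n) (fun w => [seq Qf n0 w | n0 <- s])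
   (fun w => [seq (Qf n0 w, Af n0 w) | n0 <- s]) Z.
apply: le_trans (hst _) _.
  move=> w v e; have := congr1 (map fst) e; rewrite -!map_comp; exact.
by rewrite lerD2l.
Qed.

End Info.


Section Msgs.
Variables (Om F : finType) (K L M : nat) (W : 'I_K -> Om -> {ffun 'I_L -> F}) (c : 'I_M -> nat).

Lemma msgsE w v : msgs W w = msgs W v <-> forall j, W j w = W j v.
Proof.
split => [h j | h]; first by have := congr1 (fun f : {ffun _ -> _} => f j) h; rewrite !ffunE.
by apply/ffunP => j; rewrite !ffunE h.
Qed.

Lemma WsegE a b w v : Wseg W a b w = Wseg W a b v <->
  forall j : 'I_K, (a <= j < b)%N -> W j w = W j v.
Proof.
rewrite /Wseg; split.
  move/eq_in_map => h j hj; apply: h; by rewrite mem_filter hj mem_enum.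
move=> h; apply/eq_in_map => j; rewrite mem_filter => /andP [hj _]; exact: h.
Qed.

Lemma cache_msgs h w v : (forall j, W j w = W j v) -> cacheRV W c h w = cacheRV W c h v.
Proof. by move=> e; rewrite /cacheRV; apply: eq_map => jn; rewrite e. Qed.

Definition Wm (m : {ffun 'I_K -> {ffun 'I_L -> F}}) : 'I_K -> Om -> {ffun 'I_L -> F} :=
  fun j _ => m j.

Lemma Wseg_m a b w : Wseg W a b w = Wseg (Wm (msgs W w)) a b w.
Proof. by rewrite /Wseg; apply: eq_map => j; rewrite /Wm ffunE. Qed.

Lemma cache_m h w : cacheRV W c h w = cacheRV (Wm (msgs W w)) c h w.
Proof. by rewrite /cacheRV; apply: eq_map => jn; rewrite /Wm ffunE. Qed.

Hypothesis MK : (M <= K)%N.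

Lemma enum_h0 : enum [set j : 'I_K | (j < M)%N] = map (widen_ord MK) (enum 'I_M).
Proof.
apply: (inj_map val_inj); rewrite -map_comp.
rewrite (eq_map (g := val)) // val_enum_ord.
have -> : enum [set j : 'I_K | (j < M)%N] = filter (mem [set j : 'I_K | (j < M)%N]) (enum 'I_K).
  by rewrite enumT.
rewrite (eq_filter (a2 := preim val (fun n => (n < M)%N))); last by move=> j; rewrite /= inE.
rewrite -filter_map val_enum_ord.
rewrite -{1}(subnKC MK) iotaD filter_cat add0n.
rewrite (eq_in_filter (a2 := predT)) ?filter_predT; last first.
  by move=> x; rewrite mem_iota => /andP[_ ]; rewrite add0n.
rewrite (eq_in_filter (a2 := pred0)) ?filter_pred0 ?cats0 //.
by move=> x; rewrite mem_iota => /andP[h _] /=; rewrite ltnNge h.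
Qed.

Lemma card_h0 : #|[set j : 'I_K | (j < M)%N]| = M.
Proof. by rewrite cardE enum_h0 size_map size_enum_ord. Qed.

Lemma cache_form w : cacheRV W c [set j : 'I_K | (j < M)%N] w =
  [seq take (c i) (val (fgraph (W (widen_ord MK i) w))) | i <- enum 'I_M].
Proof. by rewrite /cacheRV enum_h0 zip_map -map_comp. Qed.

Lemma cs_val m (i : 'I_M) : nat_of_ord i = m -> cache_size c m = c i.
Proof.
move=> <-; rewrite /cache_size (set_nth_default (c i)) ?size_map ?size_enum_ord ?ltn_ord //.
rewrite (nth_map i) ?size_enum_ord ?ltn_ord // nth_ord_enum //.
by rewrite -enumT size_enum_ord.
Qed.

Lemma cs_le m : (forall i, c i <= L)%N -> (cache_size c m <= L)%N.
Proof.
move=> hc; case: (ltnP m M) => h; first by rewrite (@cs_val m (Ordinal h)).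
by rewrite /cache_size nth_default // size_map size_enum_ord.
Qed.

End Msgs.

Section Indep.
Variables (R : realType) (Om : finType) (p : Om -> R).
Hypothesis hp : is_distr p.

Lemma prob_split (T : finType) (X : Om -> T) (E : pred Om) :
  prob p E = \sum_(a : T) prob p (fun v => E v && (X v == a)).
Proof.
rewrite /prob.
under [RHS]eq_bigr => a _ do rewrite big_mkcond /=.
rewrite exchange_big /= big_mkcond /=; apply: eq_bigr => v _.
case: (E v) => /=; last by rewrite big1.
by rewrite -big_mkcond /= (big_pred1 (X v)) // => a; rewrite /= eq_sym.
Qed.

Lemma prob_T (E : pred Om) : (forall v, E v) -> prob p E = 1.
Proof. by move=> h; rewrite /prob (eq_bigl predT) // ; case: hp. Qed.

Variables (F : finType) (K L : nat) (W : 'I_K -> Om -> {ffun 'I_L -> F}).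
Hypothesis hind : mutually_indep p W.

Definition Rest (j0 : 'I_K) (w : Om) := [seq W j w | j <- enum 'I_K & j != j0].

Lemma RestE j0 w v : Rest j0 w = Rest j0 v <-> forall j, j != j0 -> W j w = W j v.
Proof.
rewrite /Rest; split.
  move/eq_in_map => h j hj; apply: h; by rewrite mem_filter hj mem_enum.
move=> h; apply/eq_in_map => j; rewrite mem_filter => /andP [hj _]; exact: h.
Qed.

Lemma indep_a j0 w (a : {ffun 'I_L -> F}) :
  prob p (fun v => (Rest j0 v == Rest j0 w) && (W j0 v == a)) =
  prob p (fun v => W j0 v == a) * \prod_(i | i != j0) prob p (fun v => W i v == W i w).
Proof.
pose x := fun i => if i == j0 then a else W i w.
have -> : prob p (fun v => (Rest j0 v == Rest j0 w) && (W j0 v == a)) =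
          prob p (fun v => [forall i, W i v == x i]).
  rewrite /prob; apply: eq_bigl => v.
  apply/idP/idP.
    move=> /andP[/eqP /RestE h /eqP h2]; apply/forallP => i; rewrite /x.
    case: (eqVneq i j0) => [->|ne]; first by rewrite h2.
    by rewrite h.
  move=> /forallP h; apply/andP; split; last by have := h j0; rewrite /x eqxx.
  apply/eqP/RestE => j hj; have := h j; by rewrite /x (negbTE hj) => /eqP.
rewrite hind (bigD1 j0) //= {1}/x eqxx; congr (_ * _).
by apply: eq_bigr => i /negbTE hi; rewrite /x hi.
Qed.

Lemma indep_rest j0 w :
  prob p (fun v => (W j0 v == W j0 w) && (Rest j0 v == Rest j0 w)) =
  prob p (fun v => W j0 v == W j0 w) * prob p (fun v => Rest j0 v == Rest j0 w).
Proof.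
have -> : prob p (fun v => (W j0 v == W j0 w) && (Rest j0 v == Rest j0 w)) =
          prob p (fun v => (Rest j0 v == Rest j0 w) && (W j0 v == W j0 w)).
  by rewrite /prob; apply: eq_bigl => v; rewrite andbC.
rewrite indep_a; congr (_ * _).
rewrite (prob_split (W j0)).
transitivity (\sum_a prob p (fun v => W j0 v == a) *
   \prod_(i | i != j0) prob p (fun v => W i v == W i w)); last first.
  by apply: eq_bigr => a _; rewrite indep_a.
rewrite -mulr_suml.
have -> : \sum_a prob p (fun v => W j0 v == a) = 1.
  by rewrite -(prob_split (W j0) predT) prob_T.
by rewrite mul1r.
Qed.

End Indep.


Section Main.
Variables (R : realType) (Om : finType) (p : Om -> R) (F : finType)
  (N K M L : nat) (Qt At : eqType)
  (W : 'I_K -> Om -> {ffun 'I_L -> F})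
  (Q : 'I_N -> 'I_K -> {set 'I_K} -> Om -> Qt)
  (A : 'I_N -> 'I_K -> {set 'I_K} -> Om -> At)
  (c : 'I_M -> nat).
Hypothesis hp : is_distr p.
Hypothesis MK : (M <= K)%N.
Hypothesis hcL : forall i, (c i <= L)%N.
Variables (k : nat) (hk1 : (0 < k)%N) (hk2 : (k < K)%N).

Definition hset0 := [set j : 'I_K | (j < M)%N].
Definition thA : 'I_K := Ordinal hk2.
Definition thB : 'I_K := ordpred hk2.
Definition Useg := Wseg W 0 k.
Definition S1 := Wseg W k K.
Definition Cc := cacheRV W c hset0.
Definition Z1 := pairRV Cc S1.
Definition U0 := Wseg W 0 k.-1.
Definition S0 := Wseg W k.-1 K.
Definition Z0 := pairRV Cc S0.
Definition Wk := W thB.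
Definition Wall := msgs W.
Definition cK := cache_size c k.-1.
Definition Pfx w := take cK (val (fgraph (W thB w))).
Definition Rs := Rest W thB.

Arguments Useg : simpl never.
Arguments S1 : simpl never.
Arguments Cc : simpl never.
Arguments Z1 : simpl never.
Arguments U0 : simpl never.
Arguments S0 : simpl never.
Arguments Z0 : simpl never.
Arguments Wk : simpl never.
Arguments Wall : simpl never.
Arguments Pfx : simpl never.
Arguments Rs : simpl never.

Lemma th0_val : nat_of_ord thB = k.-1. Proof. by []. Qed.

Lemma WallE w v : Wall w = Wall v <-> forall j, W j w = W j v.
Proof. exact: msgsE. Qed.

Lemma segs_all a w v :
  Wseg W 0 a w = Wseg W 0 a v /\ (Cc w = Cc v /\ Wseg W a K w = Wseg W a K v) <->
  Wall w = Wall v.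
Proof.
rewrite WallE !WsegE; split.
  move=> [h1 [_ h3]] j; case: (ltnP j a) => hj; first by apply: h1.
  by apply: h3; rewrite hj ltn_ord.
move=> h; split; first by move=> j _; apply: h.
by split; [apply: cache_msgs | move=> j _; apply: h].
Qed.

Lemma Z1E w v : Z1 w = Z1 v <-> Cc w = Cc v /\ S1 w = S1 v.
Proof. exact: pairE. Qed.

Lemma Z0E w v : Z0 w = Z0 v <-> Cc w = Cc v /\ S0 w = S0 v.
Proof. exact: pairE. Qed.

Lemma F1 w v : Useg w = Useg v /\ Z1 w = Z1 v <-> Wall w = Wall v.
Proof. by rewrite /Useg /Z1 pairE; apply: segs_all. Qed.

Lemma F2 w v : U0 w = U0 v /\ Z0 w = Z0 v <-> Wall w = Wall v.
Proof. by rewrite /U0 /Z0 pairE; apply: segs_all. Qed.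

Lemma F3 w v : Z0 w = Z0 v <-> Wk w = Wk v /\ Z1 w = Z1 v.
Proof.
rewrite /Z0 /Z1 !pairE /S0 /S1 !WsegE /Wk; split.
  move=> [hc h]; split; last split => //.
    by apply: h; rewrite th0_val leqnn /=; lia.
  by move=> j /andP[hj1 hj2]; apply: h; rewrite hj2; lia.
move=> [hw [hc h]]; split => // j /andP[hj1 hj2].
case: (eqVneq (nat_of_ord j) k.-1) => e.
  by have -> : j = thB by apply: val_inj; rewrite /= e.
by apply: h; rewrite hj2 andbT; lia.
Qed.

Lemma F5 w v : Wall w = Wall v <-> Wk w = Wk v /\ Rs w = Rs v.
Proof.
rewrite WallE /Rs RestE /Wk; split.
  by move=> h; split => // j _.
move=> [h1 h2] j; case: (eqVneq j thB) => [->|]; first by [].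
exact: h2.
Qed.

Lemma F4 w v : Pfx w = Pfx v -> Rs w = Rs v -> Z1 w = Z1 v.
Proof.
move=> hP /RestE hR; rewrite /Z1 pairE; split; last first.
  rewrite /S1 WsegE => j /andP[hj _]; apply: hR.
  by apply/eqP => e; move: hj; rewrite e th0_val; lia.
rewrite /Cc /hset0 !(cache_form _ _ MK); apply: eq_map => i.
case: (eqVneq (widen_ord MK i) thB) => e; last by rewrite hR.
have hi : nat_of_ord i = k.-1 by rewrite -th0_val -e.
have := hP; rewrite /Pfx /cK (cs_val c hi) e; exact.
Qed.


Definition Yn th n := fun w => (Q n th hset0 w, A n th hset0 w).
Definition QA th := QAall Q A th hset0.
Definition Qall th := fun w => [ffun n => Q n th hset0 w].

Definition segm (m : {ffun 'I_K -> {ffun 'I_L -> F}}) a b :=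
  [seq m j | j <- [seq j <- enum 'I_K | (a <= nat_of_ord j < b)%N]].
Definition cachem (m : {ffun 'I_K -> {ffun 'I_L -> F}}) :=
  [seq take jn.2 (val (fgraph (m jn.1))) | jn <- zip (enum hset0) [seq c i | i <- enum 'I_M]].

Lemma U_m w : Useg w = segm (msgs W w) 0 k.
Proof. by rewrite /Useg /Wseg /segm; apply: eq_map => j; rewrite ffunE. Qed.

Lemma Z1_m w : Z1 w = (cachem (msgs W w), segm (msgs W w) k K).
Proof.
rewrite /Z1 /pairRV /Cc /S1 /Wseg /segm /cacheRV /cachem; congr (_, _).
  by apply: eq_map => jn; rewrite ffunE.
by apply: eq_map => j; rewrite ffunE.
Qed.

Lemma St_a n : Jh p Useg (Yn thA n) Z1 <= Jh p Useg (QA thA) Z1.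
Proof.
apply: (J_mono hp) => w v e.
by have := congr1 (fun f : {ffun _ -> _} => f n) e; rewrite /QA /QAall !ffunE.
Qed.

Hypothesis hpriv : forall n th th', same_distr p
  (fun w => (Q n th hset0 w, A n th hset0 w, msgs W w))
  (fun w => (Q n th' hset0 w, A n th' hset0 w, msgs W w)).

Lemma St_b n : Jh p Useg (Yn thA n) Z1 = Jh p Useg (Yn thB n) Z1.
Proof.
pose G1 := fun t : (Qt * At) * {ffun 'I_K -> {ffun 'I_L -> F}} =>
         (segm t.2 0 k, (t.1, (cachem t.2, segm t.2 k K))).
pose G2 := fun t : (Qt * At) * {ffun 'I_K -> {ffun 'I_L -> F}} =>
         (t.1, (cachem t.2, segm t.2 k K)).
have e1 : Sh p (pairRV Useg (pairRV (Yn thA n) Z1)) = Sh p (pairRV Useg (pairRV (Yn thB n) Z1)).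
  transitivity (Sh p (fun w => G1 (Q n thA hset0 w, A n thA hset0 w, msgs W w))).
    by apply: S_ext => w; rewrite /pairRV U_m Z1_m.
  rewrite (@S_same_distr _ _ p _ _ _ _ G1 (hpriv n thA thB)).
  by apply: S_ext => w; rewrite /pairRV U_m Z1_m.
have e2 : Sh p (pairRV (Yn thA n) Z1) = Sh p (pairRV (Yn thB n) Z1).
  transitivity (Sh p (fun w => G2 (Q n thA hset0 w, A n thA hset0 w, msgs W w))).
    by apply: S_ext => w; rewrite /pairRV Z1_m.
  rewrite (@S_same_distr _ _ p _ _ _ _ G2 (hpriv n thA thB)).
  by apply: S_ext => w; rewrite /pairRV Z1_m.
by rewrite /Jh e1 e2.
Qed.

Hypothesis hdet : forall n th,
  Sh p (pairRV (A n th hset0) (pairRV (Q n th hset0) Wall)) = Sh p (pairRV (Q n th hset0) Wall).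

Lemma St_c n : Sh p (pairRV (Q n thB hset0) Z1) - Sh p (pairRV (Yn thB n) Z1) <= Jh p Useg (Yn thB n) Z1.
Proof.
have e1 : Sh p (pairRV Useg (pairRV (Yn thB n) Z1)) = Sh p (pairRV (A n thB hset0) (pairRV (Q n thB hset0) Wall)).
  apply: S_part => w v; rewrite /pairRV /Yn /= ?pairE'; move: (F1 w v) (Z1E w v); tauto.
have e2 : Sh p (pairRV (Q n thB hset0) Wall) = Sh p (pairRV (pairRV (Q n thB hset0) Useg) Z1).
  apply: S_part => w v; rewrite /pairRV ?pairE'; move: (F1 w v) (Z1E w v); tauto.
have := submod hp (Q n thB hset0) Useg Z1.
rewrite /Jh e1 hdet e2 => h; lra.
Qed.

Lemma ffun_map_eq (I : finType) (T : Type) (f g : I -> T) :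
  [ffun n => f n] = [ffun n => g n] <-> [seq f n | n <- enum I] = [seq g n | n <- enum I].
Proof.
split => [e|e].
  apply: eq_map => n; by have := congr1 (fun h : {ffun _ -> _} => h n) e; rewrite !ffunE.
apply/ffunP => n; rewrite !ffunE; move/eq_in_map: e; apply; by rewrite mem_enum.
Qed.

Lemma St_d : Sh p (pairRV (Qall thB) Z1) - Sh p (pairRV (QA thB) Z1) <=
  \sum_n (Sh p (pairRV (Q n thB hset0) Z1) - Sh p (pairRV (Yn thB n) Z1)).
Proof.
have := S_list hp (fun n => Q n thB hset0) (fun n => A n thB hset0) Z1 (enum 'I_N).
rewrite big_enum /=.
have -> : Sh p (pairRV (Qall thB) Z1) = Sh p (pairRV (fun w => [seq Q n thB hset0 w | n <- enum 'I_N]) Z1).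
  apply: S_part => w v; rewrite /pairRV ?pairE' /Qall ffun_map_eq; tauto.
have -> // : Sh p (pairRV (QA thB) Z1) =
   Sh p (pairRV (fun w => [seq (Q n thB hset0 w, A n thB hset0 w) | n <- enum 'I_N]) Z1).
apply: S_part => w v; rewrite /pairRV ?pairE' /QA /QAall ffun_map_eq; tauto.
Qed.


Ltac ptac w v := rewrite /pairRV /= ?pairE';
  move: (F1 w v) (F2 w v) (F3 w v) (Z1E w v) (Z0E w v); tauto.

Hypothesis hqind : forall th, indep p (Qall th) (msgs W).

Lemma QQ th w v : QA th w = QA th v -> Qall th w = Qall th v.
Proof.
move=> e; apply/ffunP => n.
by have := congr1 (fun f : {ffun _ -> _} => f n) e; rewrite /QA /QAall /Qall !ffunE => -[].
Qed.

Lemma St_e : Jh p Useg (QA thB) Z1 <= Sh p (pairRV (Qall thB) Z1) - Sh p (pairRV (QA thB) Z1).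
Proof.
have m1 := S_mono hp (QA thB) (pairRV Useg (pairRV (Qall thB) Z1)).
have e1 : Sh p (pairRV (QA thB) (pairRV Useg (pairRV (Qall thB) Z1))) = Sh p (pairRV Useg (pairRV (QA thB) Z1)).
  apply: S_part => w v; rewrite /pairRV /= ?pairE'; move: (@QQ thB w v); tauto.
have e2 : Sh p (pairRV Useg (pairRV (Qall thB) Z1)) = Sh p (pairRV (Qall thB) Wall).
  by apply: S_part => w v; ptac w v.
have e3 : Sh p (pairRV (Qall thB) Wall) = Sh p (Qall thB) + Sh p Wall.
  by apply: (S_indep hp) => w; apply: hqind.
have e4 : Sh p (pairRV Useg Z1) = Sh p Wall.
  by apply: S_part => w v; ptac w v.
have sub := S_subadd hp (Qall thB) Z1.
move: m1; rewrite e1 e2 e3 /Jh e4 => m1; lra.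
Qed.

Lemma St_f : Jh p Useg (QA thB) Z1 = Jh p Wk (QA thB) Z1 + Jh p U0 (QA thB) Z0.
Proof.
have e1 : Sh p (pairRV U0 (pairRV (QA thB) Z0)) = Sh p (pairRV Useg (pairRV (QA thB) Z1)).
  by apply: S_part => w v; ptac w v.
have e2 : Sh p (pairRV (QA thB) Z0) = Sh p (pairRV Wk (pairRV (QA thB) Z1)).
  by apply: S_part => w v; ptac w v.
have e3 : Sh p (pairRV U0 Z0) = Sh p (pairRV Useg Z1).
  by apply: S_part => w v; ptac w v.
have e4 : Sh p Z0 = Sh p (pairRV Wk Z1).
  by apply: S_part => w v; ptac w v.
rewrite /Jh e1 e2 e3 e4; lra.
Qed.

Hypothesis hind : mutually_indep p W.
Variables (lq eps : R).
Hypothesis hlq : ln ((#|F|)%:R) = lq.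
Hypothesis hF : (1 < #|F|)%N.
Hypothesis hWk : Sh p Wk = - (L%:R * lq).
Hypothesis hrel : Sh p (pairRV Cc (QA thB)) - Sh p (pairRV Wk (pairRV Cc (QA thB))) <= eps * lq.

Lemma P_unif : - Sh p Pfx <= cK%:R * lq.
Proof.
pose s := [seq val t | t <- enum {: cK.-tuple F}].
have hs : forall w, Pfx w \in s.
  move=> w; have sz : size (Pfx w) == cK.
    by rewrite /Pfx size_takel // size_tuple card_ord; apply: cs_le.
  have -> : Pfx w = val (Tuple sz) by [].
  by rewrite map_f // mem_enum.
apply: le_trans (S_unif hp hs) _.
rewrite size_map -cardE card_tuple natrX lnXn ?hlq ?mulr_natl //.
by rewrite ltr0n; apply: ltn_trans hF.
Qed.

Lemma St_g : lq * (L%:R - cK%:R) - eps * lq <= Jh p Wk (QA thB) Z1.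
Proof.
have sm1 := submod hp Wk S1 (pairRV Cc (QA thB)).
have e1 : Sh p (pairRV S1 (pairRV Cc (QA thB))) = Sh p (pairRV (QA thB) Z1).
  by apply: S_part => w v; ptac w v.
have e2 : Sh p (pairRV (pairRV Wk S1) (pairRV Cc (QA thB))) = Sh p (pairRV Wk (pairRV (QA thB) Z1)).
  by apply: S_part => w v; ptac w v.
have sm2 := submod hp Wk (pairRV Pfx Rs) Z1.
have e3 : Sh p (pairRV (pairRV Pfx Rs) Z1) = Sh p (pairRV Pfx Rs).
  apply: S_part => w v; rewrite /pairRV /= ?pairE'; move: (@F4 w v) (Z1E w v); tauto.
have hPW : forall w v, Wk w = Wk v -> Pfx w = Pfx v by move=> w v; rewrite /Pfx /Wk => ->.
have e4 : Sh p (pairRV (pairRV Wk (pairRV Pfx Rs)) Z1) = Sh p Wall.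
  apply: S_part => w v; rewrite /pairRV /= ?pairE'.
  move: (F1 w v) (F5 w v) (hPW w v) (Z1E w v); tauto.
have e5 : Sh p Wall = Sh p (pairRV Wk Rs).
  apply: S_part => w v; rewrite /pairRV /= ?pairE'; move: (F5 w v); tauto.
have e6 : Sh p (pairRV Wk Rs) = Sh p Wk + Sh p Rs.
  by apply: (S_indep hp) => w; apply: (indep_rest hp hind).
have sub := S_subadd hp Pfx Rs.
have un := P_unif.
move: sm1 sm2; rewrite e1 e2 e3 e4 e5 e6 hWk /Jh => sm1 sm2.
rewrite mulrBr !(mulrC lq).
have hr := hrel.
lra.
Qed.

Lemma main_ineq : lq * (L%:R - cK%:R) - eps * lq + Jh p U0 (QA thB) Z0 <= N%:R * Jh p Useg (QA thA) Z1.
Proof.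
have h1 : forall n, Sh p (pairRV (Q n thB hset0) Z1) - Sh p (pairRV (Yn thB n) Z1) <= Jh p Useg (QA thA) Z1.
  by move=> n; apply: le_trans (St_c n) _; rewrite -St_b; apply: St_a.
have hs : \sum_(n : 'I_N) (Sh p (pairRV (Q n thB hset0) Z1) - Sh p (pairRV (Yn thB n) Z1))
          <= N%:R * Jh p Useg (QA thA) Z1.
  apply: le_trans (ler_sum _ (fun n _ => h1 n)) _.
  by rewrite sumr_const card_ord mulr_natl.
have := St_d; have := St_e; have := St_g; rewrite St_f => *; lra.
Qed.

End Main.


Lemma centropyE (R : realType) (Om : finType) (p : Om -> R) b (T U : eqType) (X : Om -> T) (Y : Om -> U) :
  centropy p b X Y = (Sh p Y - Sh p (pairRV X Y)) / ln b.
Proof. rewrite /centropy !entropyE; ring. Qed.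

Lemma final_alg (R : realType) (N L ck : nat) (lq eps J1 J0 : R) :
  0 < lq -> (0 < N)%N -> (0 < L)%N -> 0 <= eps ->
  lq * (L%:R - ck%:R) - eps * lq + J0 <= N%:R * J1 ->
  N%:R^-1 * (J0 / lq) + L%:R / N%:R * (1 - ck%:R / L%:R) - eps <= J1 / lq.
Proof.
move=> lq0 N0 L0 e0 h.
have Ng : 0 < (N%:R : R) by rewrite ltr0n.
have Lg : 0 < (L%:R : R) by rewrite ltr0n.
have N1 : 1 <= (N%:R : R) by rewrite ler1n.
have e1 : L%:R / N%:R * (1 - ck%:R / L%:R) = (L%:R - ck%:R) / (N%:R : R).
  by field; rewrite ?gt_eqF.
rewrite e1.
have : (lq * (L%:R - ck%:R) - eps * lq + J0) / (N%:R * lq) <= (N%:R * J1) / (N%:R * lq).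
  by rewrite ler_pM2r // invr_gt0 mulr_gt0.
have -> : N%:R * J1 / (N%:R * lq) = J1 / lq by field; rewrite ?gt_eqF.
have -> : (lq * (L%:R - ck%:R) - eps * lq + J0) / (N%:R * lq) =
          N%:R^-1 * (J0 / lq) + (L%:R - ck%:R) / N%:R - eps / N%:R.
  by field; rewrite ?gt_eqF.
move=> h2; apply: le_trans h2; rewrite lerD2l lerN2.
by rewrite ler_pdivrMr // ler_peMr.
Qed.


Unset Implicit Arguments. Set Strict Implicit.

Theorem lemma2 (R : realType) (Om : finType) (p : Om -> R) (F : finType)
  (N K M L : nat) (Qt At : eqType)
  (W : 'I_K -> Om -> {ffun 'I_L -> F})
  (Q : 'I_N -> 'I_K -> {set 'I_K} -> Om -> Qt)
  (A : 'I_N -> 'I_K -> {set 'I_K} -> Om -> At)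
  (c : 'I_M -> nat) (eps : R) :
  is_distr p ->
  (1 < #|F|)%N -> (0 < N)%N -> (0 < L)%N -> (M <= K)%N ->
  (forall i, c i <= L)%N ->
  let q : R := (#|F|)%:R in
  (forall j, entropy p q (W j) = L%:R) ->
  mutually_indep p W ->
  (forall th (h : {set 'I_K}), #|h| = M ->
     indep p (fun w => [ffun n => Q n th h w]) (msgs W)) ->
  (forall n th (h : {set 'I_K}), #|h| = M ->
     centropy p q (A n th h) (pairRV (Q n th h) (msgs W)) = 0) ->
  (forall th (h : {set 'I_K}), #|h| = M ->
     centropy p q (W th) (pairRV (cacheRV W c h) (QAall Q A th h)) <= eps) ->
  (forall n th th' (h h' : {set 'I_K}), #|h| = M -> #|h'| = M ->
     same_distr p (fun w => (Q n th h w, A n th h w, msgs W w))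
                  (fun w => (Q n th' h' w, A n th' h' w, msgs W w))) ->
  let h0 := [set j : 'I_K | (j < M)%N] in
  forall (k : nat) (hk1 : (0 < k)%N) (hk2 : (k < K)%N),
  let th1 : 'I_K := Ordinal hk2 in
  let th0 : 'I_K := ordpred hk2 in
  let rk : R := (cache_size c k.-1)%:R / L%:R in
  minfo p q (Wseg W 0 k) (QAall Q A th1 h0)
            (pairRV (cacheRV W c h0) (Wseg W k K))
  >= N%:R^-1 * minfo p q (Wseg W 0 k.-1) (QAall Q A th0 h0)
                         (pairRV (cacheRV W c h0) (Wseg W k.-1 K))
     + L%:R / N%:R * (1 - rk) - eps.
Proof.
intros hp hF hN hL MK hcL q hW hind hqind hdet hrel hpriv h0 k hk1 hk2.
cbv zeta.
pose th0 : 'I_K := ordpred hk2.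
have card0 : #|h0| = M by apply: card_h0.
have lq0 : 0 < ln q by apply: ln_gt0; rewrite /q ltr1n.
have lqn : ln q != 0 by rewrite gt_eqF.
have hpriv' : forall n th th', same_distr p
    (fun w => (Q n th (hset0 K M) w, A n th (hset0 K M) w, msgs W w))
    (fun w => (Q n th' (hset0 K M) w, A n th' (hset0 K M) w, msgs W w)).
  by move=> n th th'; apply: hpriv.
have hdet' : forall n th,
    Sh p (pairRV (A n th (hset0 K M)) (pairRV (Q n th (hset0 K M)) (Wall W))) =
    Sh p (pairRV (Q n th (hset0 K M)) (Wall W)).
  move=> n th; have := hdet n th h0 card0; rewrite centropyE => /eqP.
  by rewrite mulf_eq0 invr_eq0 (negbTE lqn) orbF subr_eq0 => /eqP <-.
have hqind' : forall th, indep p (Qall M Q th) (msgs W).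
  by move=> th; apply: hqind.
have hWk : Sh p (Wk W hk2) = - (L%:R * ln q).
  have := hW th0; rewrite entropyE => e.
  by rewrite -e /Wk; field.
have hrel' : Sh p (pairRV (Cc W c) (QA M Q A th0)) - Sh p (pairRV (Wk W hk2) (pairRV (Cc W c) (QA M Q A th0)))
    <= eps * ln q.
  have := hrel th0 h0 card0; rewrite centropyE.
  by rewrite ler_pdivrMr.
have eps0 : 0 <= eps.
  apply: le_trans (hrel th0 h0 card0); rewrite centropyE; apply: divr_ge0; last exact: ltW.
  by rewrite subr_ge0; apply: S_mono.
have key := main_ineq hp MK hcL hk1 hpriv' hdet' hqind' hind (erefl (ln q)) hF hWk hrel'.
rewrite !minfoE.
exact: (@final_alg _ N L (cK c k) (ln q) eps _ _ lq0 hN hL eps0 key).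
Qed.
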